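(* Let $A=\{z\in\mathbb{C}:\operatorname{Re}z>0\}$. Let $Q_0$ be a function holomorphic in $A$ and $Q_1$ a polynomial in one complex variable. If $Q_0(w)+vQ_1(w)\ne0$ for all $v,w\in A$, then either $S(z)=Q_0(z)+Q_1'(z)\ne0$ for all $z\in A$, or $S\equiv0$ on $A$. *)

(* Defs.v *)
From Stdlib Require Import Reals.
From Coquelicot Require Export Coquelicot.
Open Scope R_scope.

Definition right_half_plane (z : C) : Prop := 0 < Re z.

Definition C_differentiable (f : C -> C) (z : C) : Prop :=
  @ex_derive C_AbsRing C_NormedModule f z.

Definition holomorphic_on (D : C -> Prop) (f : C -> C) : Prop :=
  forall z, D z -> C_differentiable f z.

Definition is_C_polynomial (P : C -> C) : Prop :=
  exists (n : nat) (a : nat -> C),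
    forall z : C, P z = @sum_n C_Ring (fun k => mult (a k) (pow_n z k)) n.

(* Main.v *)
Require Import Defs.
From Stdlib Require Import Reals.
From Coquelicot Require Import Coquelicot.
Open Scope R_scope.
From Stdlib Require Import Lra Lia ZArith Classical.
From Stdlib Require List.

Lemma deriv_eps (f : C -> C) (z l : C) :
  @is_derive C_AbsRing C_NormedModule f z l ->
  forall eps, 0 < eps -> exists delta, 0 < delta /\
   forall w, Cmod (w - z) < delta ->
     Cmod (f w - f z - l * (w - z))%C <= eps * Cmod (w - z)%C.
Proof.
  intros [_ Hd] eps Heps.
  specialize (Hd z (fun P HP => HP) (mkposreal eps Heps)).
  destruct Hd as [d Hd].
  exists d. split. apply cond_pos.
  intros w Hw.
  specialize (Hd w). simpl in Hd.
  assert (E: (f w - f z - l * (w - z))%C = minus (minus (f w) (f z)) (scal (minus w z) l)).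
  { unfold minus, plus, opp, scal; simpl. rewrite (Cmult_comm l). reflexivity. }
  rewrite E. 
  apply Hd.
  exact Hw.
Qed.

Record rect := mkrect { ra : R; rb : R; rc : R; rd : R }.

Section Goursat.
Variable I : R -> R -> R -> R -> R.
Variables a0 b0 c0 d0 : R.
Hypothesis hab : a0 <= b0.
Hypothesis hcd : c0 <= d0.
Hypothesis addx : forall a m b c d, a0 <= a -> a <= m -> m <= b -> b <= b0 ->
  c0 <= c -> c <= d -> d <= d0 -> I a b c d = I a m c d + I m b c d.
Hypothesis addy : forall a b c m d, a0 <= a -> a <= b -> b <= b0 ->
  c0 <= c -> c <= m -> m <= d -> d <= d0 -> I a b c d = I a b c m + I a b m d.
Hypothesis loc : forall x y, a0 <= x <= b0 -> c0 <= y <= d0 ->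
  forall eps, 0 < eps -> exists delta, 0 < delta /\
   forall a b c d, a0 <= a -> a <= x -> x <= b -> b <= b0 ->
     c0 <= c -> c <= y -> y <= d -> d <= d0 -> b - a < delta -> d - c < delta ->
     Rabs (I a b c d) <= eps * (b - a + (d - c)) ^ 2.

Definition Ir (r : rect) := I (ra r) (rb r) (rc r) (rd r).

Definition step (r : rect) : rect :=
  let a := ra r in let b := rb r in let c := rc r in let d := rd r in
  let m := (a + b) / 2 in let k := (c + d) / 2 in
  if Rle_dec (Rabs (I a b c d)) (4 * Rabs (I a m c k)) then mkrect a m c k
  else if Rle_dec (Rabs (I a b c d)) (4 * Rabs (I m b c k)) then mkrect m b c k
  else if Rle_dec (Rabs (I a b c d)) (4 * Rabs (I a m k d)) then mkrect a m k d
  else mkrect m b k d.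

Definition inside (r : rect) := a0 <= ra r /\ ra r <= rb r /\ rb r <= b0 /\
  c0 <= rc r /\ rc r <= rd r /\ rd r <= d0.

Lemma step_spec r : inside r ->
  let r' := step r in
  ra r <= ra r' /\ rb r' <= rb r /\ rc r <= rc r' /\ rd r' <= rd r /\
  rb r' - ra r' = (rb r - ra r) / 2 /\ rd r' - rc r' = (rd r - rc r) / 2 /\
  Rabs (Ir r) <= 4 * Rabs (Ir r').
Proof.
  destruct r as [a b c d]. unfold inside; simpl. intros (H1&H2&H3&H4&H5&H6).
  set (m := (a + b) / 2). set (k := (c + d) / 2).
  assert (Hm1 : a <= m) by (unfold m; lra).
  assert (Hm2 : m <= b) by (unfold m; lra).
  assert (Hk1 : c <= k) by (unfold k; lra).
  assert (Hk2 : k <= d) by (unfold k; lra).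
  assert (Hsum : I a b c d = I a m c k + I m b c k + I a m k d + I m b k d).
  { rewrite (addx a m b c d) by lra.
    rewrite (addy a m c k d) by lra. rewrite (addy m b c k d) by lra. ring. }
  unfold step, Ir; simpl. fold m k.
  destruct (Rle_dec (Rabs (I a b c d)) (4 * Rabs (I a m c k))) as [E1|E1]; simpl.
  { unfold m, k in *; repeat split; lra. }
  destruct (Rle_dec (Rabs (I a b c d)) (4 * Rabs (I m b c k))) as [E2|E2]; simpl.
  { unfold m, k in *; repeat split; lra. }
  destruct (Rle_dec (Rabs (I a b c d)) (4 * Rabs (I a m k d))) as [E3|E3]; simpl.
  { unfold m, k in *; repeat split; lra. }
  repeat split; try (unfold m, k in *; lra).
  apply Rnot_le_lt in E1. apply Rnot_le_lt in E2. apply Rnot_le_lt in E3.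
  rewrite Hsum in *.
  pose proof (Rabs_triang (I a m c k + I m b c k + I a m k d) (I m b k d)).
  pose proof (Rabs_triang (I a m c k + I m b c k) (I a m k d)).
  pose proof (Rabs_triang (I a m c k) (I m b c k)).
  lra.
Qed.

Fixpoint seqr (n : nat) : rect :=
  match n with O => mkrect a0 b0 c0 d0 | S n => step (seqr n) end.

Lemma seqr_inv n : inside (seqr n) /\
  rb (seqr n) - ra (seqr n) = (b0 - a0) * (/2) ^ n /\
  rd (seqr n) - rc (seqr n) = (d0 - c0) * (/2) ^ n /\
  Rabs (Ir (seqr 0)) <= 4 ^ n * Rabs (Ir (seqr n)).
Proof.
  induction n as [|n IH].
  - simpl. unfold inside; simpl. repeat split; try lra.
  - destruct IH as (Hin & Hx & Hy & Hi).
    pose proof (step_spec (seqr n) Hin) as (S1&S2&S3&S4&S5&S6&S7).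
    simpl seqr. unfold inside in *.
    split. lra. split. rewrite S5, Hx. simpl. field.
    split. rewrite S6, Hy. simpl. field.
    simpl pow. pose proof (pow_le 4 n ltac:(lra)).
    apply Rle_trans with (1 := Hi).
    replace (4 * 4 ^ n * Rabs (Ir (step (seqr n)))) with (4 ^ n * (4 * Rabs (Ir (step (seqr n))))) by ring.
    apply Rmult_le_compat_l. lra. exact S7.
Qed.

Lemma seqr_mono n k : ra (seqr n) <= ra (seqr (n + k)) /\ rb (seqr (n + k)) <= rb (seqr n)
  /\ rc (seqr n) <= rc (seqr (n + k)) /\ rd (seqr (n + k)) <= rd (seqr n).
Proof.
  induction k as [|k IH].
  - rewrite Nat.add_0_r. lra.
  - rewrite Nat.add_succ_r. simpl seqr.
    pose proof (step_spec (seqr (n + k)) (proj1 (seqr_inv (n + k)))) as (S1&S2&S3&S4&_).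
    lra.
Qed.

Lemma seqr_ab n m : ra (seqr n) <= rb (seqr m) /\ rc (seqr n) <= rd (seqr m).
Proof.
  destruct (le_lt_dec n m) as [H|H].
  - replace m with (n + (m - n))%nat by lia.
    pose proof (seqr_mono n (m - n)). pose proof (proj1 (seqr_inv (n + (m - n)))).
    unfold inside in *. lra.
  - replace n with (m + (n - m))%nat by lia.
    pose proof (seqr_mono m (n - m)). pose proof (proj1 (seqr_inv (m + (n - m)))).
    unfold inside in *. lra.
Qed.

Lemma pow4_half n : 4 ^ n * ((/2) ^ n * (/2) ^ n) = 1.
Proof.
  induction n as [|n IH]. simpl. ring.
  simpl. replace (4 * 4 ^ n * (/ 2 * (/ 2) ^ n * (/ 2 * (/ 2) ^ n)))
    with ((4 * /2 * /2) * (4 ^ n * ((/ 2) ^ n * (/ 2) ^ n))) by ring.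
  rewrite IH. field.
Qed.

Lemma goursat_abstract : I a0 b0 c0 d0 = 0.
Proof.
  set (Ex := fun t => exists n, t = ra (seqr n)).
  set (Ey := fun t => exists n, t = rc (seqr n)).
  assert (Bx : bound Ex).
  { exists b0. intros t [n ->]. pose proof (proj1 (seqr_inv n)). unfold inside in *. lra. }
  assert (By : bound Ey).
  { exists d0. intros t [n ->]. pose proof (proj1 (seqr_inv n)). unfold inside in *. lra. }
  destruct (completeness Ex Bx (ex_intro _ a0 (ex_intro _ 0%nat eq_refl))) as [x [Hx1 Hx2]].
  destruct (completeness Ey By (ex_intro _ c0 (ex_intro _ 0%nat eq_refl))) as [y [Hy1 Hy2]].
  assert (Hxa : forall n, ra (seqr n) <= x) by (intros n; apply Hx1; exists n; reflexivity).
  assert (Hxb : forall n, x <= rb (seqr n)).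
  { intros n. apply Hx2. intros t [k ->]. apply seqr_ab. }
  assert (Hya : forall n, rc (seqr n) <= y) by (intros n; apply Hy1; exists n; reflexivity).
  assert (Hyb : forall n, y <= rd (seqr n)).
  { intros n. apply Hy2. intros t [k ->]. apply seqr_ab. }
  pose proof (Hxa 0%nat) as X1. pose proof (Hxb 0%nat) as X2.
  pose proof (Hya 0%nat) as Y1. pose proof (Hyb 0%nat) as Y2. simpl in X1, X2, Y1, Y2.
  set (s0 := b0 - a0 + (d0 - c0)).
  assert (Hbound : forall eps, 0 < eps -> Rabs (I a0 b0 c0 d0) <= eps * s0 ^ 2).
  { intros eps Heps.
    destruct (loc x y ltac:(lra) ltac:(lra) eps Heps) as [delta [Hd Hloc]].
    destruct (pow_lt_1_zero (/2) ltac:(rewrite Rabs_pos_eq; lra) (delta / (s0 + 1)))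
      as [N HN].
    { apply Rdiv_lt_0_compat; unfold s0; lra. }
    specialize (HN N (le_n N)).
    rewrite Rabs_pos_eq in HN by (apply pow_le; lra).
    destruct (seqr_inv N) as (Hin & Hsx & Hsy & Hi).
    unfold inside in Hin.
    assert (Hh : 0 < (/2) ^ N) by (apply pow_lt; lra).
    assert (Hs : s0 * (/2)^N < delta).
    { apply Rmult_lt_compat_r with (r := s0 + 1) in HN; [|unfold s0; lra].
      unfold Rdiv in HN. rewrite Rmult_assoc, Rinv_l in HN by (unfold s0; lra).
      unfold s0 in *. nra. }
    assert (HIN := Hloc (ra (seqr N)) (rb (seqr N)) (rc (seqr N)) (rd (seqr N))
      ltac:(lra) (Hxa N) (Hxb N) ltac:(lra) ltac:(lra) (Hya N) (Hyb N) ltac:(lra)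
      ltac:(unfold s0 in Hs; nra) ltac:(unfold s0 in Hs; nra)).
    rewrite Hsx, Hsy in HIN.
    replace ((b0 - a0) * (/ 2) ^ N + (d0 - c0) * (/ 2) ^ N) with (s0 * (/2)^N) in HIN
      by (unfold s0; ring).
    simpl seqr in Hi. unfold Ir in Hi. simpl in Hi.
    pose proof (pow4_half N) as P4.
    assert (H4 : 0 <= 4 ^ N) by (apply pow_le; lra).
    apply Rle_trans with (1 := Hi).
    apply Rle_trans with (4 ^ N * (eps * (s0 * (/ 2) ^ N) ^ 2)).
    apply Rmult_le_compat_l; assumption.
    right. replace (4 ^ N * (eps * (s0 * (/ 2) ^ N) ^ 2)) with
      (eps * s0 ^ 2 * (4 ^ N * ((/ 2) ^ N * (/ 2) ^ N))) by ring.
    rewrite P4. ring. }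
  destruct (Req_dec (I a0 b0 c0 d0) 0) as [E|E]; [exact E|].
  exfalso.
  assert (Hp : 0 < Rabs (I a0 b0 c0 d0)) by (apply Rabs_pos_lt; exact E).
  assert (Hs2 : 0 <= s0 ^ 2) by (apply pow2_ge_0).
  specialize (Hbound (Rabs (I a0 b0 c0 d0) / (2 * (s0 ^ 2 + 1)))
     ltac:(apply Rdiv_lt_0_compat; lra)).
  assert (Rabs (I a0 b0 c0 d0) / (2 * (s0 ^ 2 + 1)) * s0 ^ 2 < Rabs (I a0 b0 c0 d0)).
  { unfold Rdiv. 
    replace (Rabs (I a0 b0 c0 d0) * / (2 * (s0 ^ 2 + 1)) * s0 ^ 2) with
      (Rabs (I a0 b0 c0 d0) * (s0 ^ 2 / (2 * (s0 ^ 2 + 1)))) by (field; lra).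
    assert (s0 ^ 2 / (2 * (s0 ^ 2 + 1)) < 1).
    { apply Rmult_lt_reg_r with (2 * (s0 ^ 2 + 1)). lra.
      unfold Rdiv. rewrite Rmult_assoc, Rinv_l by lra. lra. }
    nra. }
  lra.
Qed.

End Goursat.

Lemma abs_sin_le x : Rabs (sin x) <= Rabs x.
Proof.
  assert (H : forall y, 0 <= y -> Rabs (sin y) <= y).
  { intros y Hy. destruct (Req_dec y 0) as [->|Hy0].
    - rewrite sin_0, Rabs_R0. lra.
    - assert (Hs := sin_lt_x y ltac:(lra)).
      assert (-y <= sin y).
      { destruct (Rle_dec y PI) as [Hp|Hp].
        - pose proof (sin_ge_0 y Hy Hp). lra.
        - pose proof (SIN_bound y). pose proof PI2_3_2. lra. }
      apply Rabs_le. lra. }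
  destruct (Rle_dec 0 x) as [Hx|Hx].
  - rewrite (Rabs_pos_eq x Hx). apply H. exact Hx.
  - assert (H' := H (-x) ltac:(lra)). rewrite sin_neg, Rabs_Ropp in H'.
    rewrite (Rabs_left x) by lra. exact H'.
Qed.

Lemma Cmod_le_sq (z : C) M : 0 <= M -> fst z ^ 2 + snd z ^ 2 <= M ^ 2 -> Cmod z <= M.
Proof.
  intros HM H. unfold Cmod. rewrite <- (sqrt_pow2 M HM).
  apply sqrt_le_1_alt. exact H.
Qed.

Definition ei (t : R) : C := (cos t, sin t).

Lemma Cmod_ei t : Cmod (ei t) = 1.
Proof.
  unfold Cmod, ei. cbv [fst snd]. rewrite <- sqrt_1. f_equal.
  pose proof (sin2_cos2 t). unfold Rsqr in H. simpl. lra.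
Qed.

Lemma Cmod_ei_diff t t' : Cmod (ei t - ei t')%C <= Rabs (t - t').
Proof.
  apply Cmod_le_sq. apply Rabs_pos.
  unfold ei. cbv [fst snd Cminus Cplus Copp].
  set (u := (t - t') / 2).
  assert (E : (cos t + - cos t') ^ 2 + (sin t + - sin t') ^ 2 = 4 * (sin u) ^ 2).
  { replace t with (t' + 2 * u) by (unfold u; field).
    rewrite cos_plus, sin_plus, cos_2a, sin_2a.
    pose proof (sin2_cos2 t'). pose proof (sin2_cos2 u). unfold Rsqr in *.
    nra. }
  rewrite E. pose proof (abs_sin_le u).
  replace (Rabs (t - t') ^ 2) with (4 * Rabs u ^ 2).
  2:{ unfold u. rewrite <- !Rsqr_pow2, <- !Rsqr_abs. unfold Rsqr. field. }
  assert (0 <= Rabs (sin u)) by apply Rabs_pos.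
  rewrite <- (Rsqr_pow2 (sin u)), Rsqr_abs, Rsqr_pow2. nra.
Qed.

Lemma cont_from_eps (g : R -> R) t0 :
  (forall eps, 0 < eps -> exists delta, 0 < delta /\
     forall t, Rabs (t - t0) < delta -> Rabs (g t - g t0) <= eps) ->
  continuous g t0.
Proof.
  intros H. apply continuity_pt_filterlim.
  intros eps Heps. destruct (H (eps / 2) ltac:(lra)) as [d [Hd Hd']].
  exists d. split. exact Hd. intros x [_ Hx]. unfold R_dist in *.
  specialize (Hd' x Hx). simpl in *. unfold R_dist. lra.
Qed.

Lemma im_le_Cmod (c : C) : Rabs (snd c) <= Cmod c.
Proof. eapply Rle_trans. apply Rmax_r. apply Rmax_Cmod. Qed.

Lemma re_le_Cmod' (c : C) : Rabs (fst c) <= Cmod c.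
Proof. eapply Rle_trans. apply Rmax_l. apply Rmax_Cmod. Qed.

Lemma abs4 p q r s : Rabs (p - q + r - s) <= Rabs p + Rabs q + Rabs r + Rabs s.
Proof.
  pose proof (Rabs_triang (p - q + r) (- s)). pose proof (Rabs_triang (p - q) r).
  pose proof (Rabs_triang p (- q)). rewrite Rabs_Ropp in *.
  unfold Rminus in *. lra.
Qed.

Lemma C_split (a b l : C) : (a - b)%C = ((a - b - l) + l)%C.
Proof. ring. Qed.

Lemma diff_bound (g h : R -> R) a b B : a <= b -> ex_RInt g a b -> ex_RInt h a b ->
  (forall t, a <= t <= b -> Rabs (g t - h t) <= B) ->
  Rabs (RInt g a b - RInt h a b) <= (b - a) * B.
Proof.
  intros Hab Hg Hh HB.
  pose proof (RInt_minus g h a b Hg Hh) as E.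
  change (minus (RInt g a b) (RInt h a b)) with (RInt g a b - RInt h a b) in E.
  rewrite <- E. apply abs_RInt_le_const. exact Hab.
  apply ex_RInt_minus; assumption.
  intros t Ht. apply HB. exact Ht.
Qed.

Section MVP.
Variable f : C -> C.
Variable z0 : C.
Variable R0 : R.
Hypothesis hR0 : 0 < R0.
Hypothesis hol : forall w, Cmod (w - z0) < R0 -> @ex_derive C_AbsRing C_NormedModule f w.

Definition Phi (r t : R) : C := (z0 + RtoC r * ei t)%C.

Lemma Phi_diff r t r' t' :
  Cmod (Phi r t - Phi r' t') <= Rabs (r - r') + Rabs r' * Rabs (t - t').
Proof.
  replace (Phi r t - Phi r' t')%C with (RtoC (r - r') * ei t + RtoC r' * (ei t - ei t'))%C.
  2:{ unfold Phi, ei, RtoC. apply injective_projections; simpl; ring. }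
  eapply Rle_trans. apply Cmod_triangle.
  rewrite !Cmod_mult, !Cmod_R, Cmod_ei.
  pose proof (Cmod_ei_diff t t'). pose proof (Rabs_pos r').
  apply Rplus_le_compat. lra. apply Rmult_le_compat_l; assumption.
Qed.

Lemma Cmod_Phi r t : Cmod (Phi r t - z0) = Rabs r.
Proof.
  replace (Phi r t - z0)%C with (RtoC r * ei t)%C.
  2:{ unfold Phi, ei, RtoC. apply injective_projections; simpl; ring. }
  rewrite Cmod_mult, Cmod_R, Cmod_ei. ring.
Qed.

Lemma f_cont_at w : Cmod (w - z0) < R0 ->
  forall eps, 0 < eps -> exists delta, 0 < delta /\
    forall w', Cmod (w' - w) < delta -> Cmod (f w' - f w) <= eps.
Proof.
  intros Hw eps Heps.
  destruct (hol w Hw) as [l Hl].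
  destruct (deriv_eps f w l Hl 1 ltac:(lra)) as [d1 [Hd1 H1]].
  assert (Hl0 : 0 <= Cmod l) by apply Cmod_ge_0.
  exists (Rmin d1 (eps / (Cmod l + 1))). split.
  { apply Rmin_pos. lra. apply Rdiv_lt_0_compat; lra. }
  intros w' Hw'.
  assert (Hw1 : Cmod (w' - w) < d1) by (eapply Rlt_le_trans; [exact Hw'|apply Rmin_l]).
  assert (Hw2 : Cmod (w' - w) < eps / (Cmod l + 1)) by (eapply Rlt_le_trans; [exact Hw'|apply Rmin_r]).
  specialize (H1 w' Hw1).
  rewrite (C_split _ _ (l * (w' - w))%C).
  eapply Rle_trans. apply Cmod_triangle. rewrite Cmod_mult.
  assert (Cmod (w' - w) * (Cmod l + 1) < eps).
  { apply Rmult_lt_compat_r with (r := Cmod l + 1) in Hw2; [|lra].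
    unfold Rdiv in Hw2. rewrite Rmult_assoc, Rinv_l in Hw2 by lra. lra. }
  nra.
Qed.

Lemma fPhi_cont r0 t0 : Rabs r0 < R0 ->
  forall eps, 0 < eps -> exists delta, 0 < delta /\
    forall r t, Rabs (r - r0) < delta -> Rabs (t - t0) < delta ->
      Cmod (f (Phi r t) - f (Phi r0 t0)) <= eps.
Proof.
  intros Hr0 eps Heps.
  assert (Hin : Cmod (Phi r0 t0 - z0) < R0) by (rewrite Cmod_Phi; exact Hr0).
  destruct (f_cont_at _ Hin eps Heps) as [d1 [Hd1 H1]].
  assert (Ha : 0 <= Rabs r0) by apply Rabs_pos.
  exists (d1 / (1 + Rabs r0)). split. apply Rdiv_lt_0_compat; lra.
  intros r t Hr Ht. apply H1.
  eapply Rle_lt_trans. apply Phi_diff.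
  assert (E : d1 = d1 / (1 + Rabs r0) * (1 + Rabs r0)) by (field; lra).
  set (q := d1 / (1 + Rabs r0)) in *. rewrite E.
  pose proof (Rabs_pos (t - t0)). nra.
Qed.

Definition U (r t : R) : R := fst (f (Phi r t)).
Definition V (r t : R) : R := snd (f (Phi r t)).

Lemma U_cont r t0 : Rabs r < R0 -> continuous (fun t => U r t) t0.
Proof.
  intros Hr. apply cont_from_eps. intros eps Heps.
  destruct (fPhi_cont r t0 Hr eps Heps) as [d [Hd H]].
  exists d. split. exact Hd. intros t Ht.
  eapply Rle_trans. 2: apply (H r t); [rewrite Rminus_diag, Rabs_R0; lra | exact Ht].
  unfold U. eapply Rle_trans. 2: apply re_le_Cmod. simpl. right. reflexivity.
Qed.

Lemma V_cont r0 t : Rabs r0 < R0 -> continuous (fun r => V r t) r0.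
Proof.
  intros Hr. apply cont_from_eps. intros eps Heps.
  destruct (fPhi_cont r0 t Hr eps Heps) as [d [Hd H]].
  exists d. split. exact Hd. intros r Hr'.
  eapply Rle_trans. 2: apply (H r t); [exact Hr' | rewrite Rminus_diag, Rabs_R0; lra].
  unfold V. eapply Rle_trans. 2: apply im_le_Cmod. simpl. right. reflexivity.
Qed.

Lemma Vr_cont r0 t : 0 < r0 < R0 -> continuous (fun r => V r t / r) r0.
Proof.
  intros Hr.
  apply (continuous_mult (fun r => V r t) (fun r => / r)).
  apply V_cont. rewrite Rabs_pos_eq; lra.
  apply continuity_pt_filterlim.
  apply (continuity_pt_inv id r0 (continuity_pt_id r0)). unfold id. lra.
Qed.


Definition Jf a b c d := RInt (fun r => V r c / r) a b - RInt (fun r => V r d / r) a b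
  + RInt (fun t => U b t) c d - RInt (fun t => U a t) c d.

Lemma exU r c d : Rabs r < R0 -> ex_RInt (fun t => U r t) c d.
Proof. intros Hr. apply (@ex_RInt_continuous R_CompleteNormedModule). intros z _. apply U_cont. exact Hr. Qed.

Lemma exV t a b : 0 < a -> a <= b -> b < R0 -> ex_RInt (fun r => V r t / r) a b.
Proof.
  intros Ha Hab Hb. apply (@ex_RInt_continuous R_CompleteNormedModule). intros z [Hz1 Hz2].
  rewrite Rmin_left in Hz1 by lra. rewrite Rmax_right in Hz2 by lra.
  apply Vr_cont. lra.
Qed.

Lemma Jf_addx a m b c d : 0 < a -> a <= m -> m <= b -> b < R0 ->
  Jf a b c d = Jf a m c d + Jf m b c d.
Proof.
  intros. unfold Jf.
  rewrite <- (RInt_Chasles (fun r => V r c / r) a m b) by (apply exV; lra).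
  rewrite <- (RInt_Chasles (fun r => V r d / r) a m b) by (apply exV; lra).
  unfold plus; simpl. ring.
Qed.

Lemma Jf_addy a b c m d : 0 < a -> a <= b -> b < R0 ->
  Jf a b c d = Jf a b c m + Jf a b m d.
Proof.
  intros. unfold Jf.
  rewrite <- (RInt_Chasles (fun t => U b t) c m d) by (apply exU; rewrite Rabs_pos_eq; lra).
  rewrite <- (RInt_Chasles (fun t => U a t) c m d) by (apply exU; rewrite Rabs_pos_eq; lra).
  unfold plus; simpl. ring.
Qed.

Lemma model_V (A : C) (l1 l2 t a b : R) : 0 < a -> a <= b ->
  is_RInt (fun r => (snd A + r * (l1 * sin t + l2 * cos t)) / r) a b
    (snd A * (ln b - ln a) + (b - a) * (l1 * sin t + l2 * cos t)).
Proof.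
  intros Ha Hab.
  set (k := l1 * sin t + l2 * cos t).
  apply is_RInt_ext with (f := fun r => snd A / r + k).
  { intros x [Hx1 Hx2]. rewrite Rmin_left in Hx1 by lra.
    assert (E : snd A / x + k = (snd A + x * k) / x) by (field; lra). exact E. }
  assert (H := @is_RInt_derive R_CompleteNormedModule
     (fun r => snd A * ln r + k * r) (fun r => snd A / r + k) a b).
  assert (E : snd A * (ln b - ln a) + (b - a) * k =
     minus (snd A * ln b + k * b) (snd A * ln a + k * a)).
  { unfold minus, plus, opp; simpl. ring. }
  rewrite E. apply H.
  - intros x [Hx1 Hx2]. rewrite Rmin_left in Hx1 by lra. auto_derive. lra. field. lra.
  - intros x [Hx1 Hx2]. rewrite Rmin_left in Hx1 by lra.
    apply (@ex_derive_continuous R_AbsRing R_NormedModule). auto_derive. lra.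
Qed.

Lemma model_U (A1 l1 l2 r c d : R) :
  is_RInt (fun t => A1 + r * (l1 * cos t - l2 * sin t)) c d
    (A1 * (d - c) + r * (l1 * (sin d - sin c) + l2 * (cos d - cos c))).
Proof.
  assert (H := @is_RInt_derive R_CompleteNormedModule
     (fun t => A1 * t + r * (l1 * sin t + l2 * cos t))
     (fun t => A1 + r * (l1 * cos t - l2 * sin t)) c d).
  assert (E : A1 * (d - c) + r * (l1 * (sin d - sin c) + l2 * (cos d - cos c)) =
     minus (A1 * d + r * (l1 * sin d + l2 * cos d)) (A1 * c + r * (l1 * sin c + l2 * cos c))).
  { unfold minus, plus, opp; simpl. ring. }
  rewrite E. apply H.
  - intros x _. auto_derive. auto. ring.
  - intros x _. apply (@ex_derive_continuous R_AbsRing R_NormedModule). auto_derive. auto.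
Qed.

Lemma model_comp (p l : C) r t :
  fst (f p + l * (Phi r t - p))%C = fst (f p + l * (z0 - p))%C + r * (fst l * cos t - snd l * sin t) /\
  snd (f p + l * (Phi r t - p))%C = snd (f p + l * (z0 - p))%C + r * (fst l * sin t + snd l * cos t).
Proof. unfold Phi, ei, RtoC. simpl. split; ring. Qed.

Lemma Jf_loc r1 r2 x y : 0 < r1 -> r2 < R0 -> r1 <= x <= r2 ->
  forall eps, 0 < eps -> exists delta, 0 < delta /\
   forall a b c d, r1 <= a -> a <= x -> x <= b -> b <= r2 ->
     c <= y -> y <= d -> b - a < delta -> d - c < delta ->
     Rabs (Jf a b c d) <= eps * (b - a + (d - c)) ^ 2.
Proof.
  intros h1 h2 hx eps Heps.
  set (p := Phi x y).
  assert (Hp : Cmod (p - z0) < R0) by (unfold p; rewrite Cmod_Phi, Rabs_pos_eq; lra).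
  destruct (hol p Hp) as [l Hl].
  set (K := 1 + R0).
  assert (HK : 0 < K) by (unfold K; lra).
  assert (Hr1 : 0 < 2 / r1 + 2) by (assert (0 < 2 / r1) by (apply Rdiv_lt_0_compat; lra); lra).
  set (e := eps / (K * (2 / r1 + 2))).
  assert (He : 0 < e) by (apply Rdiv_lt_0_compat; [lra| apply Rmult_lt_0_compat; lra]).
  destruct (deriv_eps f p l Hl e He) as [d1 [Hd1 HD]].
  exists (d1 / (2 * K)). split. apply Rdiv_lt_0_compat; lra.
  intros a b c d Ha1 Ha2 Hb1 Hb2 Hc Hd Hab Hcd.
  set (s := b - a + (d - c)).
  assert (Hs0 : 0 <= s) by (unfold s; lra).
  assert (HKs : K * s < d1).
  { assert (s < 2 * (d1 / (2 * K))) by (unfold s; lra).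
    assert (E : K * (2 * (d1 / (2 * K))) = d1) by (field; lra).
    rewrite <- E. apply Rmult_lt_compat_l; lra. }
  assert (Hpt : forall r t, a <= r <= b -> c <= t <= d ->
     Cmod (f (Phi r t) - f p - l * (Phi r t - p))%C <= e * (K * s)).
  { intros r t Hr Ht.
    assert (Hc1 : Cmod (Phi r t - p) <= K * s).
    { unfold p. eapply Rle_trans. apply Phi_diff.
      rewrite (Rabs_pos_eq x) by lra.
      assert (Rabs (r - x) <= b - a) by (apply Rabs_le; lra).
      assert (Rabs (t - y) <= d - c) by (apply Rabs_le; lra).
      assert (x * Rabs (t - y) <= R0 * (d - c)).
      { apply Rmult_le_compat; try lra. apply Rabs_pos. }
      unfold K, s. nra. }
    eapply Rle_trans. apply HD. lra.
    apply Rmult_le_compat_l; lra. }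
  set (A := (f p + l * (z0 - p))%C).
  set (k1 := fun t => fst l * sin t + snd l * cos t).
  set (k2 := fun t => fst l * cos t - snd l * sin t).
  assert (MV := fun t => model_V A (fst l) (snd l) t a b ltac:(lra) ltac:(lra)).
  assert (MU := fun r => model_U (fst A) (fst l) (snd l) r c d).
  assert (JM : RInt (fun r => (snd A + r * (fst l * sin c + snd l * cos c)) / r) a b
             - RInt (fun r => (snd A + r * (fst l * sin d + snd l * cos d)) / r) a b
             + RInt (fun t => fst A + b * (fst l * cos t - snd l * sin t)) c d
             - RInt (fun t => fst A + a * (fst l * cos t - snd l * sin t)) c d = 0).
  { rewrite (is_RInt_unique _ _ _ _ (MV c)), (is_RInt_unique _ _ _ _ (MV d)),
      (is_RInt_unique _ _ _ _ (MU b)), (is_RInt_unique _ _ _ _ (MU a)). ring. }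
  assert (BV : forall t, c <= t <= d ->
     Rabs (RInt (fun r => V r t / r) a b
           - RInt (fun r => (snd A + r * (fst l * sin t + snd l * cos t)) / r) a b)
     <= (b - a) * (e * (K * s) / r1)).
  { intros t Ht. apply diff_bound. lra. apply exV; lra. eexists; apply MV.
    intros r Hr.
    destruct (model_comp p l r t) as [_ E2].
    fold A in E2. rewrite <- E2.
    unfold V. replace (snd (f (Phi r t)) / r - snd (f p + l * (Phi r t - p))%C / r)
       with (snd (f (Phi r t) - f p - l * (Phi r t - p))%C / r) by (simpl; field; lra).
    unfold Rdiv. rewrite Rabs_mult, Rabs_inv, (Rabs_pos_eq r) by lra.
    eapply Rle_trans.
    apply Rmult_le_compat_r. left. apply Rinv_0_lt_compat. lra.
    eapply Rle_trans. apply im_le_Cmod. apply (Hpt r t Hr Ht).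
    apply Rmult_le_compat_l. apply Rmult_le_pos; [lra| apply Rmult_le_pos; lra].
    apply Rinv_le_contravar; lra. }
  assert (BU : forall r, a <= r <= b ->
     Rabs (RInt (fun t => U r t) c d
           - RInt (fun t => fst A + r * (fst l * cos t - snd l * sin t)) c d)
     <= (d - c) * (e * (K * s))).
  { intros r Hr. apply diff_bound. lra. apply exU. rewrite Rabs_pos_eq; lra.
    eexists; apply MU.
    intros t Ht.
    destruct (model_comp p l r t) as [E1 _].
    fold A in E1. rewrite <- E1.
    unfold U. replace (fst (f (Phi r t)) - fst (f p + l * (Phi r t - p))%C)
       with (fst (f (Phi r t) - f p - l * (Phi r t - p))%C) by (simpl; ring).
    eapply Rle_trans. apply re_le_Cmod'. apply (Hpt r t Hr Ht). }
  assert (BV1 := BV c ltac:(lra)). assert (BV2 := BV d ltac:(lra)).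
  assert (BU1 := BU a ltac:(lra)). assert (BU2 := BU b ltac:(lra)).
  unfold Jf.
  set (X1 := RInt (fun r => V r c / r) a b) in *.
  set (X2 := RInt (fun r => V r d / r) a b) in *.
  set (X3 := RInt (fun t => U b t) c d) in *.
  set (X4 := RInt (fun t => U a t) c d) in *.
  set (Y1 := RInt (fun r => (snd A + r * (fst l * sin c + snd l * cos c)) / r) a b) in *.
  set (Y2 := RInt (fun r => (snd A + r * (fst l * sin d + snd l * cos d)) / r) a b) in *.
  set (Y3 := RInt (fun t => fst A + b * (fst l * cos t - snd l * sin t)) c d) in *.
  set (Y4 := RInt (fun t => fst A + a * (fst l * cos t - snd l * sin t)) c d) in *.
  replace (X1 - X2 + X3 - X4) with ((X1 - Y1) - (X2 - Y2) + (X3 - Y3) - (X4 - Y4)) by lra.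
  assert (Htot : Rabs ((X1 - Y1) - (X2 - Y2) + (X3 - Y3) - (X4 - Y4)) <=
    2 * ((b - a) * (e * (K * s) / r1)) + 2 * ((d - c) * (e * (K * s)))).
  { eapply Rle_trans. apply abs4. lra. }
  eapply Rle_trans. exact Htot.
  assert (Heps' : eps = e * (K * (2 / r1 + 2))) by (unfold e; field; split; lra).
  rewrite Heps'.
  assert (Hba : b - a <= s) by (unfold s; lra).
  assert (Hdc : d - c <= s) by (unfold s; lra).
  assert (HeKs : 0 <= e * (K * s)) by (apply Rmult_le_pos; [lra|apply Rmult_le_pos; lra]).
  assert (Hinv : 0 < / r1) by (apply Rinv_0_lt_compat; lra).
  unfold Rdiv. fold s.
  replace (2 * ((b - a) * (e * (K * s) * / r1)) + 2 * ((d - c) * (e * (K * s))))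
    with ((e * (K * s)) * (2 * (b - a) * / r1 + 2 * (d - c))) by ring.
  replace (e * (K * (2 * / r1 + 2)) * s ^ 2) with ((e * (K * s)) * (s * (2 * / r1 + 2))) by ring.
  apply Rmult_le_compat_l. exact HeKs.
  nra.
Qed.

Lemma Jf_zero r1 r2 : 0 < r1 -> r1 <= r2 -> r2 < R0 -> Jf r1 r2 0 (2 * PI) = 0.
Proof.
  intros h1 h12 h2. pose proof PI_RGT_0 as HPI.
  apply (goursat_abstract Jf r1 r2 0 (2 * PI)).
  - exact h12.
  - lra.
  - intros. apply Jf_addx; lra.
  - intros. apply Jf_addy; lra.
  - intros x y Hx Hy eps Heps.
    destruct (Jf_loc r1 r2 x y h1 h2 Hx eps Heps) as [d [Hd H]].
    exists d. split. exact Hd. intros. apply H; assumption.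
Qed.

Definition Fm r := RInt (fun t => U r t) 0 (2 * PI).

Lemma Fm_const r1 r2 : 0 < r1 -> r1 <= r2 -> r2 < R0 -> Fm r1 = Fm r2.
Proof.
  intros h1 h12 h2. pose proof (Jf_zero r1 r2 h1 h12 h2) as H.
  unfold Jf in H. unfold Fm.
  assert (E : ei (2 * PI) = ei 0).
  { unfold ei. rewrite cos_2PI, sin_2PI, cos_0, sin_0. reflexivity. }
  unfold V, Phi in H. rewrite E in H. lra.
Qed.

Lemma mvp r : 0 < r < R0 -> Fm r = 2 * PI * fst (f z0).
Proof.
  intros Hr. pose proof PI_RGT_0 as HPI.
  destruct (Req_dec (Fm r) (2 * PI * fst (f z0))) as [E|E]; [exact E|exfalso].
  set (e := Rabs (Fm r - 2 * PI * fst (f z0))).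
  assert (He : 0 < e) by (apply Rabs_pos_lt; lra).
  assert (Hz : Cmod (z0 - z0) < R0).
  { replace (z0 - z0)%C with (RtoC 0) by ring. rewrite Cmod_0. lra. }
  destruct (f_cont_at z0 Hz (e / (4 * PI)) ltac:(apply Rdiv_lt_0_compat; lra)) as [d [Hd H]].
  set (r' := Rmin r (d / 2)).
  assert (Hr' : 0 < r' <= r).
  { split. apply Rmin_pos; lra. apply Rmin_l. }
  assert (Hr'd : r' < d) by (eapply Rle_lt_trans; [apply Rmin_r| lra]).
  assert (EF : Fm r' = Fm r) by (apply Fm_const; lra).
  assert (B : Rabs (Fm r' - RInt (fun _ => fst (f z0)) 0 (2 * PI)) <= (2 * PI - 0) * (e / (4 * PI))).
  { apply diff_bound. lra. apply exU. rewrite Rabs_pos_eq; lra.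
    apply ex_RInt_const.
    intros t Ht. unfold U.
    replace (fst (f (Phi r' t)) - fst (f z0)) with (fst (f (Phi r' t) - f z0)%C) by (simpl; ring).
    eapply Rle_trans. apply re_le_Cmod'. apply H.
    rewrite Cmod_Phi, Rabs_pos_eq; lra. }
  rewrite RInt_const in B. unfold scal in B; simpl in B. unfold mult in B; simpl in B.
  rewrite EF in B. fold e in B.
  replace ((2 * PI - 0) * (e / (4 * PI))) with (e / 2) in B by (field; lra).
  replace ((2 * PI - 0) * fst (f z0)) with (2 * PI * fst (f z0)) in B by ring.
  fold e in B. lra.
Qed.

End MVP.

Lemma RInt_nonneg_zero (g : R -> R) a b : a < b ->
  (forall t, a <= t <= b -> continuous g t) ->
  (forall t, a <= t <= b -> 0 <= g t) -> RInt g a b = 0 ->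
  forall t, a <= t <= b -> g t = 0.
Proof.
  intros Hab Hc Hp HI t0 Ht0.
  destruct (Req_dec (g t0) 0) as [E|E]; [exact E|exfalso].
  assert (Hg : 0 < g t0) by (pose proof (Hp t0 Ht0); lra).
  assert (Hct := Hc t0 Ht0).
  apply continuity_pt_filterlim in Hct.
  destruct (Hct (g t0 / 2) ltac:(lra)) as [eta [Heta Hη]].
  assert (Hex : forall u v, a <= u -> u <= v -> v <= b -> ex_RInt g u v).
  { intros u v Hu Huv Hv. apply (@ex_RInt_continuous R_CompleteNormedModule).
    intros z [Hz1 Hz2]. apply Hc.
    rewrite Rmin_left in Hz1 by lra. rewrite Rmax_right in Hz2 by lra. lra. }
  set (al := Rmax a (t0 - eta / 2)). set (be := Rmin b (t0 + eta / 2)).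
  assert (Hal : a <= al <= t0) by (unfold al; split; [apply Rmax_l | apply Rmax_lub; lra]).
  assert (Hbe : t0 <= be <= b) by (unfold be; split; [apply Rmin_glb; lra | apply Rmin_l]).
  assert (Hab' : al < be).
  { unfold al, be. destruct (Rle_dec a (t0 - eta / 2)).
    - rewrite Rmax_right by lra. destruct (Rle_dec b (t0 + eta/2)).
      + rewrite Rmin_left by lra. lra.
      + rewrite Rmin_right by lra. lra.
    - rewrite Rmax_left by lra. destruct (Rle_dec b (t0 + eta/2)).
      + rewrite Rmin_left by lra. lra.
      + rewrite Rmin_right by lra. lra. }
  assert (I1 : 0 <= RInt g a al).
  { apply RInt_ge_0. lra. apply Hex; lra. intros x Hx. apply Hp. lra. }
  assert (I3 : 0 <= RInt g be b).
  { apply RInt_ge_0. lra. apply Hex; lra. intros x Hx. apply Hp. lra. }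
  assert (I2 : RInt (fun _ => g t0 / 2) al be <= RInt g al be).
  { apply RInt_le. lra. apply ex_RInt_const. apply Hex; lra.
    intros x Hx.
    destruct (Req_dec x t0) as [->|Hne]. lra.
    assert (t0 - eta / 2 <= al) by apply Rmax_r.
    assert (be <= t0 + eta / 2) by apply Rmin_r.
    assert (Hd : dist R_met x t0 < eta).
    { simpl. unfold R_dist. apply Rabs_lt_between'. lra. }
    specialize (Hη x (conj (conj I (not_eq_sym Hne)) Hd)).
    simpl in Hη. unfold R_dist in Hη.
    apply Rabs_lt_between' in Hη. lra. }
  rewrite RInt_const in I2. unfold scal in I2; simpl in I2; unfold mult in I2; simpl in I2.
  rewrite <- (RInt_Chasles g a al b) in HI by (apply Hex; lra).
  rewrite <- (RInt_Chasles g al be b) in HI by (apply Hex; lra).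
  unfold plus in HI; simpl in HI.
  assert (0 < (be - al) * (g t0 / 2)) by (apply Rmult_lt_0_compat; lra).
  lra.
Qed.

Lemma C_eq_dec (x y : C) : {x = y} + {x <> y}.
Proof.
  destruct x as [x1 x2], y as [y1 y2].
  destruct (Req_EM_T x1 y1) as [->|H1]; [|right; intros E; inversion E; contradiction].
  destruct (Req_EM_T x2 y2) as [->|H2]; [left; reflexivity|right; intros E; inversion E; contradiction].
Qed.

Lemma polar z0 w : w <> z0 -> exists t, 0 <= t <= 2 * PI /\ Phi z0 (Cmod (w - z0)) t = w.
Proof.
  intros Hw. pose proof PI_RGT_0 as HPI.
  set (u := (w - z0)%C). set (r := Cmod u).
  assert (Hr : 0 < r).
  { apply Cmod_gt_0. unfold u. intros E. apply Hw.
    replace w with ((w - z0) + z0)%C by ring. rewrite E. ring. }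
  assert (Hr2 : r ^ 2 = fst u ^ 2 + snd u ^ 2) by (unfold r; apply Cmod2_alt).
  set (x := fst u / r).
  assert (Hx : -1 <= x <= 1).
  { assert (x ^ 2 <= 1).
    { unfold x. replace ((fst u / r) ^ 2) with (fst u ^ 2 / r ^ 2) by (field; lra).
      apply Rmult_le_reg_r with (r ^ 2). apply pow_lt; lra.
      unfold Rdiv. rewrite Rmult_assoc, Rinv_l by (apply pow_nonzero; lra).
      pose proof (pow2_ge_0 (snd u)). lra. }
    split; nra. }
  assert (Hs : sqrt (1 - x²) = Rabs (snd u) / r).
  { rewrite <- (Rabs_pos_eq r) by lra. rewrite <- Rabs_div by lra.
    rewrite <- sqrt_Rsqr_abs. f_equal. unfold x, Rsqr.
    apply Rmult_eq_reg_r with (r * r). 2: nra.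
    transitivity (r * r - fst u * fst u). field. lra.
    transitivity (snd u * snd u). replace (r * r) with (r ^ 2) by ring. rewrite Hr2. ring. field. lra. }
  assert (Hfin : forall t, cos t = x -> sin t = snd u / r -> Phi z0 r t = w).
  { intros t Hc Hsn. unfold Phi, ei, RtoC. rewrite Hc, Hsn. unfold x.
    replace w with (z0 + u)%C by (unfold u; ring).
    apply injective_projections; simpl; field; lra. }
  destruct (Rle_dec 0 (snd u)) as [Hp|Hn].
  - exists (acos x). split. pose proof (acos_bound x). lra.
    apply Hfin. apply cos_acos; exact Hx.
    rewrite sin_acos by exact Hx. rewrite Hs, Rabs_pos_eq by exact Hp. reflexivity.
  - exists (2 * PI - acos x). split. pose proof (acos_bound x). lra.
    apply Hfin.
    + rewrite cos_minus, cos_2PI, sin_2PI, cos_acos by exact Hx. ring.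
    + rewrite sin_minus, cos_2PI, sin_2PI, sin_acos by exact Hx.
      rewrite Hs, Rabs_left by lra. field. lra.
Qed.

Lemma disc_re_zero (f : C -> C) z0 R0 (hR0 : 0 < R0)
  (hol : forall w, Cmod (w - z0) < R0 -> @ex_derive C_AbsRing C_NormedModule f w)
  (hpos : forall w, Cmod (w - z0) < R0 -> 0 <= fst (f w))
  (h0 : fst (f z0) = 0) :
  forall w, Cmod (w - z0) < R0 -> fst (f w) = 0.
Proof.
  intros w Hw. pose proof PI_RGT_0 as HPI.
  destruct (C_eq_dec w z0) as [->|Hne]. exact h0.
  destruct (polar z0 w Hne) as [t [Ht Hpt]].
  set (r := Cmod (w - z0)) in *.
  assert (Hr : 0 < r).
  { apply Cmod_gt_0. intros E. apply Hne.
    replace w with ((w - z0) + z0)%C by ring. rewrite E. ring. }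
  assert (HF := mvp f z0 R0 hR0 hol r ltac:(lra)).
  rewrite h0, Rmult_0_r in HF. unfold Fm in HF.
  assert (Hz := RInt_nonneg_zero (fun t => U f z0 r t) 0 (2 * PI) ltac:(lra)).
  specialize (Hz (fun t' _ => U_cont f z0 R0 hol r t' ltac:(rewrite Rabs_pos_eq; lra))).
  assert (Hnn : forall t', 0 <= t' <= 2 * PI -> 0 <= U f z0 r t').
  { intros t' _. unfold U. apply hpos. rewrite Cmod_Phi, Rabs_pos_eq; lra. }
  specialize (Hz Hnn HF t Ht). unfold U in Hz. rewrite Hpt in Hz. exact Hz.
Qed.

Lemma derive_conv1 (f : C -> C) w l : @is_derive C_AbsRing C_NormedModule f w l ->
  @is_derive C_AbsRing (AbsRing_NormedModule C_AbsRing) f w l.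
Proof.
  intros [Hlin Hd]. split. apply is_linear_scal_l.
  intros x Hx eps. specialize (Hd x Hx eps). exact Hd.
Qed.

Lemma derive_conv2 (f : C -> C) w l : @is_derive C_AbsRing (AbsRing_NormedModule C_AbsRing) f w l ->
  @is_derive C_AbsRing C_NormedModule f w l.
Proof.
  intros [Hlin Hd]. split. apply is_linear_scal_l.
  intros x Hx eps. specialize (Hd x Hx eps). exact Hd.
Qed.

Lemma ex_derive_negsq (f : C -> C) w : @ex_derive C_AbsRing C_NormedModule f w ->
  @ex_derive C_AbsRing C_NormedModule (fun z => - (f z * f z))%C w.
Proof.
  intros [l Hl].
  assert (Hl' := derive_conv1 f w l Hl).
  assert (H := @is_derive_mult C_AbsRing f f w l l Hl' Hl' Cmult_comm).
  apply (@is_derive_opp C_AbsRing (AbsRing_NormedModule C_AbsRing)) in H.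
  eexists. apply derive_conv2. exact H.
Qed.

Lemma disc_zero (f : C -> C) z0 R0 (hR0 : 0 < R0)
  (hol : forall w, Cmod (w - z0) < R0 -> @ex_derive C_AbsRing C_NormedModule f w)
  (hpos : forall w, Cmod (w - z0) < R0 -> 0 <= fst (f w))
  (h0 : f z0 = 0%C) :
  forall w, Cmod (w - z0) < R0 -> f w = 0%C.
Proof.
  assert (Hre := disc_re_zero f z0 R0 hR0 hol hpos ltac:(rewrite h0; reflexivity)).
  set (g := fun z => (- (f z * f z))%C).
  assert (Hg := disc_re_zero g z0 R0 hR0 (fun w Hw => ex_derive_negsq f w (hol w Hw))).
  assert (Hgre : forall w, Cmod (w - z0) < R0 -> fst (g w) = snd (f w) ^ 2).
  { intros w Hw. unfold g. simpl. rewrite (Hre w Hw). ring. }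
  specialize (Hg ltac:(intros w Hw; rewrite Hgre by exact Hw; apply pow2_ge_0)).
  specialize (Hg ltac:(unfold g; rewrite h0; simpl; ring)).
  intros w Hw.
  assert (Hi : snd (f w) ^ 2 = 0) by (rewrite <- Hgre by exact Hw; apply Hg; exact Hw).
  apply injective_projections. simpl. apply Hre. exact Hw.
  simpl. nra.
Qed.

Lemma halfplane_zero (f : C -> C) (hol : holomorphic_on right_half_plane f)
  (hpos : forall w, right_half_plane w -> 0 <= fst (f w)) z0 z1
  (h0 : right_half_plane z0) (h1 : right_half_plane z1) (hz : f z0 = 0%C) : f z1 = 0%C.
Proof.
  unfold right_half_plane, Re in *.
  set (m := Rmin (fst z0) (fst z1)).
  assert (Hm : 0 < m) by (apply Rmin_pos; assumption).
  assert (Hdisc : forall p, m <= fst p -> forall w, Cmod (w - p) < m -> 0 < fst w).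
  { intros p Hp w Hw. pose proof (re_le_Cmod' (w - p)%C) as H. simpl in H.
    assert (H2 : Rabs (fst w + - fst p) < m) by lra.
    apply Rabs_lt_between in H2. lra. }
  destruct (archimed (Cmod (z1 - z0) / m)) as [Har _].
  set (N := S (Z.to_nat (up (Cmod (z1 - z0) / m)))).
  assert (HN : Cmod (z1 - z0) / m < INR N).
  { unfold N. rewrite S_INR.
    assert (0 <= Cmod (z1 - z0) / m) by (apply Rdiv_le_0_compat; [apply Cmod_ge_0|lra]).
    rewrite INR_IZR_INZ, Z2Nat.id. lra.
    apply le_IZR. lra. }
  assert (HN0 : 0 < INR N) by (unfold N; rewrite S_INR; pose proof (pos_INR (Z.to_nat (up (Cmod (z1 - z0) / m)))); lra).
  clearbody N.
  set (pk := fun k : nat => (z0 + RtoC (INR k / INR N) * (z1 - z0))%C).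
  assert (Hre : forall k, (k <= N)%nat -> m <= fst (pk k)).
  { intros k Hk. unfold pk. simpl.
    assert (Hk' : INR k <= INR N) by (apply le_INR; exact Hk).
    set (s := INR k / INR N).
    assert (Hs : 0 <= s <= 1).
    { unfold s. split. apply Rdiv_le_0_compat. apply pos_INR. lra.
      apply Rmult_le_reg_r with (INR N). lra. unfold Rdiv. rewrite Rmult_assoc, Rinv_l; lra. }
    assert (m <= fst z0) by apply Rmin_l. assert (m <= fst z1) by apply Rmin_r.
    assert (0 <= (1 - s) * (fst z0 - m)) by (apply Rmult_le_pos; lra).
    assert (0 <= s * (fst z1 - m)) by (apply Rmult_le_pos; lra).
    ring_simplify. nra. }
  assert (Hstep : forall k, Cmod (pk (S k) - pk k) < m).
  { intros k. unfold pk.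
    replace (z0 + RtoC (INR (S k) / INR N) * (z1 - z0) - (z0 + RtoC (INR k / INR N) * (z1 - z0)))%C
      with (RtoC (/ INR N) * (z1 - z0))%C.
    2:{ rewrite S_INR. apply injective_projections; simpl; field; lra. }
    rewrite Cmod_mult, Cmod_R, Rabs_pos_eq by (left; apply Rinv_0_lt_compat; lra).
    apply Rmult_lt_reg_l with (INR N). lra.
    rewrite <- Rmult_assoc, Rinv_r, Rmult_1_l by lra.
    apply Rmult_lt_reg_r with (/ m). apply Rinv_0_lt_compat; lra.
    rewrite Rmult_assoc, Rinv_r, Rmult_1_r by lra. exact HN. }
  assert (Hall : forall k, (k <= N)%nat -> f (pk k) = 0%C).
  { induction k as [|k IH]; intros Hk.
    - unfold pk. replace (z0 + RtoC (INR 0 / INR N) * (z1 - z0))%C with z0. exact hz.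
      simpl. unfold Rdiv. rewrite Rmult_0_l. apply injective_projections; simpl; ring.
    - assert (Hk' : (k <= N)%nat) by lia.
      specialize (IH Hk').
      assert (Hp := Hre k Hk').
      apply (disc_zero f (pk k) m Hm).
      + intros w Hw. apply hol. unfold right_half_plane, Re. apply (Hdisc (pk k) Hp w Hw).
      + intros w Hw. apply hpos. unfold right_half_plane, Re. apply (Hdisc (pk k) Hp w Hw).
      + exact IH.
      + apply Hstep. }
  replace z1 with (pk N). apply Hall. lia.
  unfold pk. unfold Rdiv. rewrite Rinv_r by lra.
  apply injective_projections; simpl; ring.
Qed.

Fixpoint cpow (z : C) (n : nat) : C := match n with O => RtoC 1 | S n => Cmult z (cpow z n) end.
Fixpoint prodC (s : list C) (z : C) : C :=
  match s with nil => RtoC 1 | cons r s => Cmult (Cminus z r) (prodC s z) end.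

Module AlgPart.
From mathcomp Require Import ssreflect ssrfun ssrbool eqtype ssrnat seq choice fintype bigop ssralg poly.
From mathcomp Require Import Rstruct complex.
Import GRing.Theory.

Definition toM (z : C) : R[i] := Complex (fst z) (snd z).
Definition toC (x : R[i]) : C := (complex.Re x, complex.Im x).

Lemma toMC x : toM (toC x) = x. Proof. by case: x. Qed.
Lemma toCM z : toC (toM z) = z. Proof. by case: z. Qed.
Lemma toM_add a b : toM (Cplus a b) = (toM a + toM b)%R. Proof. reflexivity. Qed.
Lemma toM_mul a b : toM (Cmult a b) = (toM a * toM b)%R. Proof. reflexivity. Qed.
Lemma toM_sub a b : toM (Cminus a b) = (toM a - toM b)%R. Proof. reflexivity. Qed.
Lemma toM_1 : toM (RtoC 1) = 1%R. Proof. reflexivity. Qed.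
Lemma toM_0 : toM (RtoC 0) = 0%R. Proof. reflexivity. Qed.

Section Alg.
Local Open Scope ring_scope.

Lemma toM_cpow z n : toM (cpow z n) = toM z ^+ n.
Proof. elim: n => [|n IH] //=. by rewrite toM_mul IH exprS. Qed.

Lemma toM_pow_n (z : C) n : toM (@pow_n C_Ring z n) = toM z ^+ n.
Proof. elim: n => [|n IH] //=. rewrite exprS -IH. reflexivity. Qed.

Lemma toM_prodC s z : toM (prodC s z) = \prod_(x <- map toM s) (toM z - x).
Proof.
  elim: s => [|r s IH] /=. by rewrite big_nil.
  by rewrite big_cons toM_mul toM_sub IH.
Qed.

Lemma toM_sum_n (a : nat -> C) z n :
  toM (@sum_n C_Ring (fun k => mult (a k) (pow_n z k)) n) =
  \sum_(i < n.+1) toM (a i) * toM z ^+ i.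
Proof.
  elim: n => [|n IH].
  - rewrite sum_O big_ord_recr big_ord0 /= GRing.add0r GRing.expr0 GRing.mulr1.
    rewrite [toM (mult _ _)]toM_mul. rewrite [toM one]toM_1. by rewrite GRing.mulr1.
  - have E := @sum_Sn _ (fun k => mult (a k) (@pow_n C_Ring z k)) n.
    rewrite E big_ord_recr /= -IH.
    rewrite [toM (plus _ _)]toM_add [toM (mult (a _) _)]toM_mul -toM_pow_n. reflexivity.
Qed.

Lemma poly_factor (Q1 : C -> C) : is_C_polynomial Q1 ->
  exists (lc : C) (s : list C), forall z, Q1 z = Cmult lc (prodC s z).
Proof.
  move=> [n [a Ha]].
  set p := \poly_(i < n.+1) toM (a i).
  have Hp : forall z, toM (Q1 z) = p.[toM z].
    by move=> z; rewrite Ha toM_sum_n horner_poly.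
  have [rs Hrs] := closed_field_poly_normal p.
  exists (toC (lead_coef p)), (map toC rs) => z.
  rewrite -[Q1 z]toCM -[Cmult _ _]toCM; congr toC.
  rewrite Hp toM_mul toMC toM_prodC -map_comp.
  rewrite {1}Hrs hornerZ horner_prod; congr (_ * _).
  have -> : [seq (toM \o toC) i | i <- rs] = rs.
    by elim: rs {Hrs} => //= x rs ->; rewrite toMC.
  by apply: eq_bigr => x _; rewrite hornerXsubC.
Qed.

Lemma croot (c : C) (m : nat) : (0 < m)%N -> exists d, cpow d m = c.
Proof.
  move=> Hm.
  have : size ('X^m - (toM c)%:P) != 1%N by rewrite size_XnsubC //; case: m Hm.
  move/closed_rootP => [x Hx].
  exists (toC x). rewrite -[cpow _ _]toCM -[c]toCM; congr toC.
  rewrite toM_cpow toMC.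
  move: Hx; rewrite /root !hornerE => /eqP Hx.
  by apply/eqP; rewrite -subr_eq0 Hx.
Qed.

End Alg.

End AlgPart.
Import AlgPart.
Delimit Scope C_scope with C.
Open Scope R_scope.

Fixpoint dprodC (s : list C) (z : C) : C :=
  match s with nil => RtoC 0 | cons r s => Cplus (prodC s z) (Cmult (Cminus z r) (dprodC s z)) end.

Lemma prodC_derive s z :
  @is_derive C_AbsRing C_NormedModule (prodC s) z (dprodC s z).
Proof.
  induction s as [|r s IH]; simpl.
  - apply (@is_derive_const C_AbsRing C_NormedModule).
  - apply derive_conv2.
    pose proof (@is_derive_minus C_AbsRing (AbsRing_NormedModule C_AbsRing) (fun t => t) (fun _ => r) z one zero
        (@is_derive_id C_AbsRing z) (@is_derive_const C_AbsRing (AbsRing_NormedModule C_AbsRing) r z)) as H0.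
    pose proof (@is_derive_ext C_AbsRing (AbsRing_NormedModule C_AbsRing) _ (fun w => Cminus w r) z _
       (fun t => Logic.eq_refl) H0) as H1.
    pose proof (@is_derive_mult C_AbsRing (fun w => Cminus w r) (prodC s) z _ (dprodC s z)
      H1 (derive_conv1 _ _ _ IH) Cmult_comm) as H.
    match type of H with is_derive _ _ ?L =>
      replace (Cplus (prodC s z) (Cmult (Cminus z r) (dprodC s z))) with L end.
    exact H.
    unfold plus, mult, minus, opp, one, zero; simpl. apply injective_projections; simpl; ring.
Qed.

Lemma Q1_derive (Q1 : C -> C) lc s : (forall z, Q1 z = Cmult lc (prodC s z)) ->
  forall z, C_derive Q1 z = Cmult lc (dprodC s z).
Proof.
  intros HQ z. apply is_C_derive_unique.
  apply (@is_derive_ext C_AbsRing C_NormedModule (fun w => Cmult lc (prodC s w))).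
  { intros t. symmetry. apply HQ. }
  apply derive_conv2.
  assert (H := @is_derive_mult C_AbsRing (fun _ => lc) (prodC s) z zero (dprodC s z)
      (@is_derive_const C_AbsRing (AbsRing_NormedModule C_AbsRing) lc z) (derive_conv1 _ _ _ (prodC_derive s z)) Cmult_comm).
  replace (Cmult lc (dprodC s z)) with
      (plus (mult (zero : C_AbsRing) (prodC s z)) (mult lc (dprodC s z))).
  exact H.
  unfold plus, mult, zero; simpl. apply injective_projections; simpl; ring.
Qed.

Lemma prodC_ex_derive s z : @ex_derive C_AbsRing C_NormedModule (prodC s) z.
Proof. eexists. apply prodC_derive. Qed.

Lemma Cmult_neq0 (a b : C) : a <> RtoC 0 -> b <> RtoC 0 -> Cmult a b <> RtoC 0.
Proof.
  intros Ha Hb E. apply Cmod_gt_0 in Ha. apply Cmod_gt_0 in Hb.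
  assert (Cmod (Cmult a b) = 0) by (rewrite E; apply Cmod_0).
  rewrite Cmod_mult in H. nra.
Qed.

Lemma W_pos s z : (forall r, List.In r s -> fst r <= 0) -> 0 < fst z ->
  prodC s z <> RtoC 0 /\ 0 <= fst (Cmult (dprodC s z) (Cconj (prodC s z))) /\
  (s <> nil -> 0 < fst (Cmult (dprodC s z) (Cconj (prodC s z)))).
Proof.
  intros Hs Hz. induction s as [|r s IH].
  - simpl. split. intros E. inversion E. lra. split. lra. intros H; exfalso; apply H; reflexivity.
  - assert (Hr : fst r <= 0) by (apply Hs; left; reflexivity).
    destruct IH as [IH1 [IH2 _]]. { intros x Hx. apply Hs. right. exact Hx. }
    set (a := prodC s z) in *. set (b := dprodC s z) in *.
    assert (Hu : Cminus z r <> RtoC 0).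
    { intros E. assert (fst (Cminus z r) = 0) by (rewrite E; reflexivity). simpl in H. lra. }
    change (prodC (r :: s) z) with (Cmult (Cminus z r) a).
    change (dprodC (r :: s) z) with (Cplus a (Cmult (Cminus z r) b)).
    assert (Ha : 0 < fst a ^ 2 + snd a ^ 2).
    { apply Cmod_gt_0 in IH1. rewrite <- Cmod2_alt. apply pow_lt. exact IH1. }
    assert (E : fst (Cmult (Cplus a (Cmult (Cminus z r) b)) (Cconj (Cmult (Cminus z r) a))) =
       (fst a ^ 2 + snd a ^ 2) * (fst z - fst r) +
       ((fst z - fst r) ^ 2 + (snd z - snd r) ^ 2) * fst (Cmult b (Cconj a))).
    { simpl. ring. }
    rewrite E.
    assert (0 <= (fst z - fst r) ^ 2 + (snd z - snd r) ^ 2) by (pose proof (pow2_ge_0 (fst z - fst r)); pose proof (pow2_ge_0 (snd z - snd r)); lra).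
    assert (0 < (fst a ^ 2 + snd a ^ 2) * (fst z - fst r)) by (apply Rmult_lt_0_compat; lra).
    assert (0 <= ((fst z - fst r) ^ 2 + (snd z - snd r) ^ 2) * fst (Cmult b (Cconj a))) by (apply Rmult_le_pos; lra).
    split. apply Cmult_neq0; assumption.
    split. lra. intros _. lra.
Qed.

Fixpoint cntr (r : C) (s : list C) : nat :=
  match s with nil => O | cons x s => if C_eq_dec x r then S (cntr r s) else cntr r s end.
Fixpoint remr (r : C) (s : list C) : list C :=
  match s with nil => nil | cons x s => if C_eq_dec x r then remr r s else cons x (remr r s) end.

Lemma prod_split r s z : prodC s z = Cmult (cpow (Cminus z r) (cntr r s)) (prodC (remr r s) z).
Proof.
  induction s as [|x s IH]; simpl.
  - apply injective_projections; simpl; ring.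
  - destruct (C_eq_dec x r) as [->|Hne]; simpl; rewrite IH; ring.
Qed.

Lemma cntr_pos r s : List.In r s -> (0 < cntr r s)%nat.
Proof.
  induction s as [|x s IH]; simpl. tauto.
  intros Hin. destruct (C_eq_dec x r) as [E|E]. lia.
  destruct Hin as [Hx|Hin]. contradiction. apply IH; exact Hin.
Qed.

Lemma remr_nz r s : prodC (remr r s) r <> RtoC 0.
Proof.
  induction s as [|x s IH]; simpl.
  - intros E. inversion E. lra.
  - destruct (C_eq_dec x r) as [E|Hne]. exact IH. simpl. apply Cmult_neq0. 2: exact IH.
    intros E. apply Hne. replace x with (Cminus r (Cminus r x)) by ring. rewrite E. ring.
Qed.

Lemma lc_prod_derive lc s z :
  @is_derive C_AbsRing C_NormedModule (fun w => Cmult lc (prodC s w)) z (Cmult lc (dprodC s z)).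
Proof.
  apply derive_conv2.
  assert (H := @is_derive_mult C_AbsRing (fun _ => lc) (prodC s) z zero (dprodC s z)
      (@is_derive_const C_AbsRing (AbsRing_NormedModule C_AbsRing) lc z) (derive_conv1 _ _ _ (prodC_derive s z)) Cmult_comm).
  replace (Cmult lc (dprodC s z)) with
      (plus (mult (zero : C_AbsRing) (prodC s z)) (mult lc (dprodC s z))).
  exact H.
  unfold plus, mult, zero; simpl. apply injective_projections; simpl; ring.
Qed.

Lemma mul_const_derive (f : C -> C) (k : C) z :
  @ex_derive C_AbsRing C_NormedModule f z ->
  @ex_derive C_AbsRing C_NormedModule (fun w => Cmult (f w) k) z.
Proof.
  intros [l Hl]. eexists. apply derive_conv2.
  exact (@is_derive_mult C_AbsRing f (fun _ => k) z l zero (derive_conv1 _ _ _ Hl)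
      (@is_derive_const C_AbsRing (AbsRing_NormedModule C_AbsRing) k z) Cmult_comm).
Qed.

Lemma sq_pos (b : C) : b <> RtoC 0 -> 0 < fst b ^ 2 + snd b ^ 2.
Proof. intros Hb. apply Cmod_gt_0 in Hb. rewrite <- Cmod2_alt. apply pow_lt. exact Hb. Qed.

Lemma re_div (a b : C) : b <> RtoC 0 ->
  fst (Cdiv a b) = fst (Cmult a (Cconj b)) / (fst b ^ 2 + snd b ^ 2).
Proof.
  intros Hb. pose proof (sq_pos b Hb).
  unfold Cdiv, Cinv. simpl. field. simpl in H. lra.
Qed.

Lemma hnz_re (Q0 Q1 : C -> C)
  (hnz : forall v w : C, right_half_plane v -> right_half_plane w ->
           Cplus (Q0 w) (Cmult v (Q1 w)) <> RtoC 0) :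
  forall w, right_half_plane w -> 0 <= fst (Cmult (Q0 w) (Cconj (Q1 w))).
Proof.
  intros w Hw. apply Rnot_lt_le. intros Hneg.
  assert (Hq : Q1 w <> RtoC 0).
  { intros E. rewrite E in Hneg. simpl in Hneg. lra. }
  apply (hnz (Cdiv (Copp (Q0 w)) (Q1 w)) w).
  - unfold right_half_plane, Re. rewrite re_div by exact Hq.
    pose proof (sq_pos _ Hq).
    replace (fst (Cmult (Copp (Q0 w)) (Cconj (Q1 w)))) with (- fst (Cmult (Q0 w) (Cconj (Q1 w))))
      by (simpl; ring).
    apply Rdiv_lt_0_compat; lra.
  - exact Hw.
  - field. exact Hq.
Qed.

Lemma cpow_mul a b m : cpow (Cmult a b) m = Cmult (cpow a m) (cpow b m).
Proof. induction m as [|m IH]; simpl. apply injective_projections; simpl; ring. rewrite IH. ring. Qed.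

Lemma cpow_R t m : cpow (RtoC t) m = RtoC (t ^ m).
Proof. induction m as [|m IH]; simpl. reflexivity. rewrite IH. apply injective_projections; simpl; ring. Qed.

Lemma cont_prod_conj (A B : C -> C) r :
  (forall e, 0 < e -> exists d, 0 < d /\ forall w, Cmod (w - r) < d -> Cmod (Cminus (A w) (A r)) <= e) ->
  (forall e, 0 < e -> exists d, 0 < d /\ forall w, Cmod (w - r) < d -> Cmod (Cminus (B w) (B r)) <= e) ->
  forall e, 0 < e -> exists d, 0 < d /\ forall w, Cmod (w - r) < d ->
    Rabs (fst (Cmult (A w) (Cconj (B w))) - fst (Cmult (A r) (Cconj (B r)))) <= e.
Proof.
  intros HA HB e He.
  set (KA := Cmod (A r) + 1). set (KB := Cmod (B r) + 1).
  assert (HKA : 0 < KA) by (unfold KA; pose proof (Cmod_ge_0 (A r)); lra).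
  assert (HKB : 0 < KB) by (unfold KB; pose proof (Cmod_ge_0 (B r)); lra).
  destruct (HA (e / (2 * KB)) ltac:(apply Rdiv_lt_0_compat; lra)) as [d1 [Hd1 H1]].
  destruct (HB (Rmin 1 (e / (2 * KA))) ltac:(apply Rmin_pos; [lra| apply Rdiv_lt_0_compat; lra])) as [d2 [Hd2 H2]].
  exists (Rmin d1 d2). split. apply Rmin_pos; lra.
  intros w Hw.
  assert (Hw1 : Cmod (w - r) < d1) by (eapply Rlt_le_trans; [exact Hw| apply Rmin_l]).
  assert (Hw2 : Cmod (w - r) < d2) by (eapply Rlt_le_trans; [exact Hw| apply Rmin_r]).
  specialize (H1 w Hw1). specialize (H2 w Hw2).
  assert (H2a : Cmod (Cminus (B w) (B r)) <= 1) by (eapply Rle_trans; [exact H2|apply Rmin_l]).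
  assert (H2b : Cmod (Cminus (B w) (B r)) <= e / (2 * KA)) by (eapply Rle_trans; [exact H2|apply Rmin_r]).
  assert (HBw : Cmod (B w) <= KB).
  { replace (B w) with (Cplus (Cminus (B w) (B r)) (B r)) by ring.
    eapply Rle_trans. apply Cmod_triangle. unfold KB. lra. }
  replace (fst (Cmult (A w) (Cconj (B w))) - fst (Cmult (A r) (Cconj (B r)))) with
    (fst (Cplus (Cmult (Cminus (A w) (A r)) (Cconj (B w))) (Cmult (A r) (Cconj (Cminus (B w) (B r))))))
    by (simpl; ring).
  eapply Rle_trans. apply re_le_Cmod'.
  eapply Rle_trans. apply Cmod_triangle.
  rewrite !Cmod_mult, !Cmod_conj.
  assert (E1 : Cmod (Cminus (A w) (A r)) * Cmod (B w) <= e / (2 * KB) * KB).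
  { apply Rmult_le_compat; try apply Cmod_ge_0; assumption. }
  assert (E2 : Cmod (A r) * Cmod (Cminus (B w) (B r)) <= KA * (e / (2 * KA))).
  { apply Rmult_le_compat; try apply Cmod_ge_0. unfold KA; lra. assumption. }
  replace (e / (2 * KB) * KB) with (e / 2) in E1 by (field; lra).
  replace (KA * (e / (2 * KA))) with (e / 2) in E2 by (field; lra).
  lra.
Qed.

Lemma root_case (Q0 Q1 : C -> C) (hQ0 : holomorphic_on right_half_plane Q0)
  (hnz : forall v w : C, right_half_plane v -> right_half_plane w ->
           Cplus (Q0 w) (Cmult v (Q1 w)) <> RtoC 0)
  r m (q : C -> C) (hr : 0 < fst r) (hm : (0 < m)%nat)
  (hq : forall z, @ex_derive C_AbsRing C_NormedModule q z) (hqr : q r <> RtoC 0)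
  (hQ1 : forall z, Q1 z = Cmult (cpow (Cminus z r) m) (q z)) : False.
Proof.
  assert (Hdisc : forall w, Cmod (w - r) < fst r -> 0 < fst w).
  { intros w Hw. pose proof (re_le_Cmod' (w - r)%C) as H. simpl in H.
    assert (H2 : Rabs (fst w + - fst r) < fst r) by lra.
    apply Rabs_lt_between in H2. lra. }
  assert (HQ0r : Q0 r <> RtoC 0).
  { intros E. apply (hnz (RtoC 1) r). unfold right_half_plane, Re; simpl; lra. exact hr.
    rewrite hQ1, E. destruct m as [|m']. inversion hm.
    simpl. apply injective_projections; simpl; ring. }
  set (c := Cdiv (Copp (Q0 r)) (q r)).
  assert (Hc : Cmult c (q r) = Copp (Q0 r)) by (unfold c; field; exact hqr).
  destruct (croot c m (ssrbool.introT ssrnat.ltP hm)) as [d Hd].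
  set (A := fun w => Copp (Q0 w)). set (B := fun w => Cmult c (q w)).
  assert (HA : forall e, 0 < e -> exists dl, 0 < dl /\ forall w, Cmod (w - r) < dl -> Cmod (Cminus (A w) (A r)) <= e).
  { intros e He.
    destruct (f_cont_at Q0 r (fst r) (fun w Hw => hQ0 w (Hdisc w Hw)) r
      ltac:(replace (r - r)%C with (RtoC 0) by ring; rewrite Cmod_0; lra) e He) as [dl [Hdl H]].
    exists dl. split. exact Hdl. intros w Hw.
    unfold A. replace (Cminus (Copp (Q0 w)) (Copp (Q0 r))) with (Copp (Cminus (Q0 w) (Q0 r))) by ring.
    rewrite Cmod_opp. apply H. exact Hw. }
  assert (HB : forall e, 0 < e -> exists dl, 0 < dl /\ forall w, Cmod (w - r) < dl -> Cmod (Cminus (B w) (B r)) <= e).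
  { intros e He.
    assert (Hc0 : 0 <= Cmod c) by apply Cmod_ge_0.
    destruct (f_cont_at q r 1 (fun w _ => hq w) r
      ltac:(replace (r - r)%C with (RtoC 0) by ring; rewrite Cmod_0; lra) (e / (Cmod c + 1))
      ltac:(apply Rdiv_lt_0_compat; lra)) as [dl [Hdl H]].
    exists dl. split. exact Hdl. intros w Hw.
    unfold B. replace (Cminus (Cmult c (q w)) (Cmult c (q r))) with (Cmult c (Cminus (q w) (q r))) by ring.
    rewrite Cmod_mult. specialize (H w Hw).
    apply Rle_trans with (Cmod c * (e / (Cmod c + 1))).
    apply Rmult_le_compat_l; assumption.
    apply Rle_trans with ((Cmod c + 1) * (e / (Cmod c + 1))).
    apply Rmult_le_compat_r. left; apply Rdiv_lt_0_compat; lra. lra.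
    right. field. lra. }
  set (F := fun w => fst (Cmult (A w) (Cconj (B w)))).
  assert (HFr : 0 < F r).
  { unfold F, A, B. rewrite Hc. pose proof (sq_pos _ HQ0r). simpl. simpl in H. nra. }
  destruct (cont_prod_conj A B r HA HB (F r / 2) ltac:(lra)) as [dl [Hdl HF]].
  set (rho := Rmin dl (fst r)).
  assert (Hrho : 0 < rho) by (apply Rmin_pos; lra).
  assert (Hd0 : 0 <= Cmod d) by apply Cmod_ge_0.
  set (t := rho / (2 * (Cmod d + 1))).
  assert (Ht : 0 < t) by (apply Rdiv_lt_0_compat; lra).
  set (w := Cplus r (Cmult (RtoC t) d)).
  assert (Hwr : Cmod (w - r) < rho).
  { replace (w - r)%C with (Cmult (RtoC t) d) by (unfold w; ring).
    rewrite Cmod_mult, Cmod_R, Rabs_pos_eq by lra.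
    apply Rle_lt_trans with (t * (Cmod d + 1)). apply Rmult_le_compat_l; lra.
    unfold t. replace (rho / (2 * (Cmod d + 1)) * (Cmod d + 1)) with (rho / 2) by (field; lra). lra. }
  assert (Hw1 : Cmod (w - r) < dl) by (eapply Rlt_le_trans; [exact Hwr|apply Rmin_l]).
  assert (Hw2 : Cmod (w - r) < fst r) by (eapply Rlt_le_trans; [exact Hwr|apply Rmin_r]).
  assert (HFw : 0 < F w).
  { specialize (HF w Hw1). fold (F w) (F r) in HF. apply Rabs_le_between in HF. lra. }
  assert (HQ1w : Q1 w = Cmult (RtoC (t ^ m)) (B w)).
  { rewrite hQ1. replace (Cminus w r) with (Cmult (RtoC t) d) by (unfold w; ring).
    rewrite cpow_mul, cpow_R, Hd. unfold B. ring. }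
  assert (HT : 0 < t ^ m) by (apply pow_lt; exact Ht).
  assert (Hkey : fst (Cmult (Copp (Q0 w)) (Cconj (Q1 w))) = t ^ m * F w).
  { rewrite HQ1w. unfold F, A. simpl. ring. }
  assert (Hq1 : Q1 w <> RtoC 0).
  { intros E. rewrite E in Hkey. simpl in Hkey. nra. }
  apply (hnz (Cdiv (Copp (Q0 w)) (Q1 w)) w).
  - unfold right_half_plane, Re. rewrite re_div by exact Hq1. rewrite Hkey.
    pose proof (sq_pos _ Hq1). apply Rdiv_lt_0_compat. nra. lra.
  - unfold right_half_plane, Re. apply Hdisc. exact Hw2.
  - field. exact Hq1.
Qed.

Theorem lemma2p2 (Q0 Q1 : C -> C)
  (hQ0 : holomorphic_on right_half_plane Q0)
  (hQ1 : is_C_polynomial Q1)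
  (hnz : forall v w : C, right_half_plane v -> right_half_plane w ->
           Cplus (Q0 w) (Cmult v (Q1 w)) <> 0%C) :
  let S := fun z : C => Cplus (Q0 z) (C_derive Q1 z) in
  (forall z : C, right_half_plane z -> S z <> 0%C) \/
  (forall z : C, right_half_plane z -> S z = 0%C).
Proof.
  intros S.
  destruct (poly_factor Q1 hQ1) as [lc [s Hs]].
  assert (HD := Q1_derive Q1 lc s Hs).
  assert (Hre := hnz_re Q0 Q1 hnz).
  assert (HS : forall z, S z = Cplus (Q0 z) (Cmult lc (dprodC s z))).
  { intros z. unfold S. rewrite HD. reflexivity. }
  assert (H1 : right_half_plane (RtoC 1)) by (unfold right_half_plane, Re; simpl; lra).
  destruct (C_eq_dec lc (RtoC 0)) as [Hlc|Hlc].
  { left. intros z Hz E. apply (hnz (RtoC 1) z H1 Hz).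
    rewrite <- E, HS, Hs, Hlc. apply injective_projections; simpl; ring. }
  destruct s as [|r0 s'].
  {
    set (g := fun w => Cmult (Q0 w) (Cconj lc)).
    assert (Hg : holomorphic_on right_half_plane g).
    { intros w Hw. apply mul_const_derive. apply hQ0. exact Hw. }
    assert (Hgp : forall w, right_half_plane w -> 0 <= fst (g w)).
    { intros w Hw. specialize (Hre w Hw). rewrite Hs in Hre. unfold g.
      replace (fst (Cmult (Q0 w) (Cconj lc))) with (fst (Cmult (Q0 w) (Cconj (Cmult lc (prodC nil w)))))
        by (simpl; ring). exact Hre. }
    assert (HSc : forall z, S z = Q0 z).
    { intros z. rewrite HS. simpl. apply injective_projections; simpl; ring. }
    destruct (classic (exists z0, right_half_plane z0 /\ S z0 = 0%C)) as [[z0 [Hz0 HS0]]|Hno].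
    - right. intros z1 Hz1.
      assert (Hg0 : g z0 = RtoC 0).
      { unfold g. rewrite <- HSc, HS0. apply injective_projections; simpl; ring. }
      assert (Hg1 := halfplane_zero g Hg Hgp z0 z1 Hz0 Hz1 Hg0).
      rewrite HSc. unfold g in Hg1.
      assert (Hcl : Cconj lc <> RtoC 0).
      { intros E. apply Hlc. rewrite <- (Cconj_conj lc), E.
        apply injective_projections; simpl; ring. }
      replace (Q0 z1) with (Cmult (Cmult (Q0 z1) (Cconj lc)) (Cinv (Cconj lc))) by (field; exact Hcl).
      rewrite Hg1. ring.
    - left. intros z Hz E. apply Hno. exists z. split; assumption. }
  set (s := cons r0 s') in *.
  destruct (classic (exists r, List.In r s /\ 0 < fst r)) as [[r [Hin Hr]]|Hno].
  { exfalso.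
    apply (root_case Q0 Q1 hQ0 hnz r (cntr r s) (fun z => Cmult lc (prodC (remr r s) z)) Hr).
    - apply cntr_pos. exact Hin.
    - intros z. eexists. apply lc_prod_derive.
    - apply Cmult_neq0. exact Hlc. apply remr_nz.
    - intros z. rewrite Hs, (prod_split r s z). ring. }
  left. intros z Hz E.
  assert (Hroots : forall r, List.In r s -> fst r <= 0).
  { intros r Hin. apply Rnot_lt_le. intros Hr. apply Hno. exists r. split; assumption. }
  destruct (W_pos s z Hroots Hz) as [HP [_ HW]].
  specialize (HW ltac:(discriminate)).
  specialize (Hre z Hz).
  rewrite HS in E.
  assert (Hsum : fst (Cmult (Q0 z) (Cconj (Q1 z))) +
      (fst lc ^ 2 + snd lc ^ 2) * fst (Cmult (dprodC s z) (Cconj (prodC s z))) = 0).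
  { replace 0 with (fst (Cmult (Cplus (Q0 z) (Cmult lc (dprodC s z))) (Cconj (Q1 z)))).
    rewrite Hs. simpl. ring.
    rewrite E. simpl. ring. }
  pose proof (sq_pos lc Hlc).
  assert (0 < (fst lc ^ 2 + snd lc ^ 2) * fst (Cmult (dprodC s z) (Cconj (prodC s z))))
    by (apply Rmult_lt_0_compat; assumption).
  lra.
Qed.
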